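(* Let $\alpha\ge4$ and let $N'$, $M_l$, $C_j$ be as produced by the clustering procedure. Let $l\in N'$ and $j\in N$. (1) For every $j_b\in M_l$, $c_{lj}\le 2c_{j_bj}+2\alpha C_j$. (2) For all $j_a,j_b\in M_l$ with $c_{lj_a}\le c_{lj_b}$, $c_{j_aj}\le 3c_{j_bj}+4\alpha C_j$.
   Context: Setting: finite set $N$ of locations, capacity $M>0$, demands $d_j\ge0$, integer $k\ge1$, metric costs $c_{ij}$ on $N$ (nonnegative, $c_{ii}=0$, symmetric, triangle inequality). $(x,y)$ is an optimal solution of the LP-relaxation: minimize $\sum_{i,j}d_jc_{ij}x_{ij}$ s.t. $\sum_{i}x_{ij}=1$ ($j\in N$), $\sum_j d_jx_{ij}\le My_i$ ($i\in N$), $\sum_i y_i\le k$, $0\le x_{ij}\le y_i$, $0\le y_i\le1$. For $j\in N$ let $C_j=\sum_{i\in N}c_{ij}x_{ij}$. Clustering procedure: order the locations as $1,\dots,n$ so that $C_1\le\dots\le C_n$ (ties arbitrary); start with $N'=\emptyset$; for $j=1,\dots,n$ in turn, if there is no $l\in N'$ with $c_{lj}\le 2\alpha C_j$, add $j$ to $N'$. Then for each $j\in N$ let $N'(j)$ be a closest element of $N'$ to $j$ (ties arbitrary), and set $M_l=\{j\in N: N'(j)=l\}$ for $l\in N'$. *)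

(* Defs.v *)
From HB Require Import structures.
From mathcomp Require Import all_boot all_order all_algebra.
Set Implicit Arguments. Unset Strict Implicit. Unset Printing Implicit Defensive.
Import Order.TTheory GRing.Theory Num.Theory.
Local Open Scope ring_scope.

Section Defs.
Variables (R : realFieldType) (T : finType).

Definition is_metric (c : T -> T -> R) : Prop :=
  [/\ forall i j, 0 <= c i j,
      forall i, c i i = 0,
      forall i j, c i j = c j i &
      forall i j l, c i l <= c i j + c j l].

Definition lp_feasible (M : R) (d : T -> R) (k : nat)
    (x : T -> T -> R) (y : T -> R) : Prop :=
  [/\ forall j, \sum_i x i j = 1,
      forall i, \sum_j d j * x i j <= M * y i,
      \sum_i y i <= k%:R,
      forall i j, 0 <= x i j /\ x i j <= y i &
      forall i, 0 <= y i /\ y i <= 1].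

Definition lp_obj (d : T -> R) (c : T -> T -> R) (x : T -> T -> R) : R :=
  \sum_i \sum_j d j * c i j * x i j.

Definition lp_optimal M d k c x y : Prop :=
  lp_feasible M d k x y /\
  forall x' y', lp_feasible M d k x' y' -> lp_obj d c x <= lp_obj d c x'.

Definition Cval (c : T -> T -> R) (x : T -> T -> R) (j : T) : R :=
  \sum_i c i j * x i j.

Definition cluster_step (c : T -> T -> R) (alpha : R) (C : T -> R)
    (N' : seq T) (j : T) : seq T :=
  if has (fun l => c l j <= 2 * alpha * C j) N' then N' else rcons N' j.

Definition clusterN' c alpha C (s : seq T) : seq T :=
  foldl (cluster_step c alpha C) [::] s.

End Defs.

(* Main.v *)
Require Import Defs.
From HB Require Import structures.
From mathcomp Require Import all_boot all_order all_algebra.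
From mathcomp Require Import lra.
Import Order.TTheory GRing.Theory Num.Theory.
Local Open Scope ring_scope.

Lemma fold_mono (R : realFieldType) (T : finType) (c : T -> T -> R) alpha C
  (s : seq T) (N0 : seq T) l :
  l \in N0 -> l \in foldl (cluster_step c alpha C) N0 s.
Proof.
elim: s N0 => [|a s IH] N0 //= Hl; apply: IH.
rewrite [cluster_step _ _ _ N0 a]/cluster_step; case: ifP => _ //; by rewrite mem_rcons in_cons Hl orbT.
Qed.

Lemma fold_wit (R : realFieldType) (T : finType) (c : T -> T -> R) alpha C
  (s : seq T) (N0 : seq T) j :
  c j j <= 2 * alpha * C j -> j \in s ->
  exists2 l, l \in foldl (cluster_step c alpha C) N0 s & c l j <= 2 * alpha * C j.
Proof.
move=> Hjj; elim: s N0 => [|a s IH] N0 //=.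
rewrite in_cons => /orP [/eqP Eja|Hs]; last exact: IH.
move: Hjj; rewrite Eja => Hjj.
rewrite [cluster_step _ _ _ N0 a]/cluster_step; case: ifP => [/hasP [l Hl Hc]|_].
  by exists l => //; apply: (@fold_mono R T c alpha C s N0 l).
by exists a => //; apply: (@fold_mono R T c alpha C s (rcons N0 a) a); rewrite mem_rcons mem_head.
Qed.

Theorem lemma4 (R : realFieldType) (T : finType)
    (M : R) (d : T -> R) (k : nat) (c : T -> T -> R)
    (x : T -> T -> R) (y : T -> R) (alpha : R)
    (s : seq T) (nearest : T -> T) :
  0 < M ->
  (forall j, 0 <= d j) ->
  (1 <= k)%N ->
  is_metric c ->
  lp_optimal M d k c x y ->
  4 <= alpha ->
  (* s orders all locations (each exactly once) with C nondecreasing *)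
  perm_eq s (enum T) ->
  sorted (fun a b => Cval c x a <= Cval c x b) s ->
  (* nearest j = N'(j), a closest element of N' to j *)
  (forall j, nearest j \in clusterN' c alpha (Cval c x) s) ->
  (forall j l, l \in clusterN' c alpha (Cval c x) s ->
     c (nearest j) j <= c l j) ->
  forall l j, l \in clusterN' c alpha (Cval c x) s ->
  (forall jb, nearest jb = l ->
     c l j <= 2 * c jb j + 2 * alpha * Cval c x j) /\
  (forall ja jb, nearest ja = l -> nearest jb = l -> c l ja <= c l jb ->
     c ja j <= 3 * c jb j + 4 * alpha * Cval c x j).
Proof.
move=> _ _ _ [c0 cii csym ctri] [[_ _ _ Hx _] _] Ha Hperm _ Hnin Hnear l j Hl.
have HC : 0 <= Cval c x j.
  by apply: sumr_ge0 => i _; apply: mulr_ge0 => //; case: (Hx i j).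
have Hjj : c j j <= 2 * alpha * Cval c x j.
  by rewrite cii; apply: mulr_ge0 => //; apply: mulr_ge0 => //; apply: le_trans Ha.
have Hjs : j \in s by rewrite (perm_mem Hperm) mem_enum.
have [l' Hl' Hc'] := @fold_wit R T c alpha (Cval c x) s [::] j Hjj Hjs.
have Hnj : c (nearest j) j <= 2 * alpha * Cval c x j.
  exact: le_trans (Hnear j l' Hl') Hc'.
have key : forall jb, nearest jb = l -> c l jb <= 2 * alpha * Cval c x j + c jb j.
  move=> jb Hjb; rewrite -{1}Hjb.
  apply: le_trans (Hnear jb (nearest j) (Hnin j)) _.
  apply: le_trans (ctri (nearest j) j jb) _.
  by rewrite (csym j jb) lerD2r.
have P1 : forall jb, nearest jb = l ->
     c l j <= 2 * c jb j + 2 * alpha * Cval c x j.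
  move=> jb Hjb; apply: le_trans (ctri l jb j) _.
  have := key jb Hjb; move: (2 * alpha * Cval c x j) => b; lra.
split => // ja jb Ha' Hb' Hab.
apply: le_trans (ctri ja l j) _.
rewrite (csym ja l).
have K := key jb Hb'; have K1 := P1 jb Hb'.
move: K K1 Hab; rewrite -!mulrA.
move: (alpha * Cval c x j) (c jb j) (c l jb) (c l ja) (c l j) => a u v w z.
clear; move=> *; lra.
Qed.
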